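(* If $n\ge4$, then $r^D_\alpha$ is odd for every pseudo-composition $\alpha$ of $n$; that is, $c^D_{2,0}(n)=0$ and $c^D_{2,1}(n)=2^n$.
   Context: A signed permutation of $[n]$ is a bijection $w$ of $\{\pm1,\ldots,\pm n\}$ with $w(-i)=-w(i)$; it is even if an even number of $w(1),\ldots,w(n)$ are negative; these form $\mathfrak{S}^D_n$. With $w(0):=-w(2)$, $D(w)=\{i\in\{0,\ldots,n-1\}: w(i)>w(i+1)\}$. A pseudo-composition of $n$ ($\alpha\models_0 n$) is a sequence $(\alpha_1,\ldots,\alpha_\ell)$ of integers with $\alpha_1\ge0$, $\alpha_2,\ldots,\alpha_\ell>0$ and sum $n$, with $D(\alpha)=\{\alpha_1,\alpha_1+\alpha_2,\ldots,\alpha_1+\cdots+\alpha_{\ell-1}\}$. Then $r^D_\alpha=|\{w\in\mathfrak{S}^D_n: D(w)=D(\alpha)\}|$ and $c^D_{p,i}(n)=|\{\alpha\models_0 n: r^D_\alpha\equiv i\pmod p\}|$; there are $2^n$ pseudo-compositions of $n$. *)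

(* Defs.v *)
From mathcomp Require Import all_boot all_order all_algebra all_fingroup.
Set Implicit Arguments. Unset Strict Implicit. Unset Printing Implicit Defensive.
Import Order.TTheory GRing.Theory Num.Theory.

(* A signed permutation w of [n] is determined by its values w(1),...,w(n)
   (extended by w(-i) = -w(i)); we encode it as a pair (sigma, s) with sigma
   a permutation of 'I_n and s a sign vector:
      w(i+1) = (-1)^(s i) * (sigma i + 1)   for i : 'I_n.
   This is a bijection between sperm n and the signed permutations of [n]. *)
Definition sperm (n : nat) := ({perm 'I_n} * {ffun 'I_n -> bool})%type.

Definition wpos n (w : sperm n) (j : nat) : int :=
  match j with
  | 0 => 0
  | j'.+1 =>
    match @insub nat (fun k => (k < n)%N) _ j' with
    | Some i => (if w.2 i then -1 else 1) * ((w.1 i).+1)%:Z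
    | None => 0
    end
  end%R.

Definition wval n (w : sperm n) (j : nat) : int :=
  if j == 0%N then (- wpos w 2)%R else wpos w j.

Definition even_sperm n (w : sperm n) : bool :=
  ~~ odd #|[set i : 'I_n | w.2 i]|.

Definition Dsperm n (w : sperm n) : {set 'I_n} :=
  [set i : 'I_n | (wval w i.+1 < wval w i)%R].

Definition is_pcomp (n : nat) (a : seq nat) : bool :=
  [&& size a != 0%N, all (fun x => 0 < x)%N (behead a) & sumn a == n].

Definition Dpcomp (a : seq nat) : seq nat :=
  [seq sumn (take k a) | k <- iota 1 (size a).-1].

Definition rD (n : nat) (a : seq nat) : nat :=
  #|[set w : sperm n | even_sperm w &&
       (Dsperm w == [set i : 'I_n | (i : nat) \in Dpcomp a])]|.

(* Every pseudo-composition of n has length <= n+1 and entries <= n; this list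
   enumerates, without repetition, all sequences of length 1..n+1 with
   entries <= n. *)
Definition candidates (n : nat) : seq (seq nat) :=
  flatten [seq [seq map (@nat_of_ord n.+1) (val t) | t : l.-tuple 'I_n.+1]
          | l <- iota 1 n.+1].

Definition cD (p i n : nat) : nat :=
  count (fun a => is_pcomp n a && (rD n a == i %[mod p])) (candidates n).

(* Main.v *)
Require Import Defs.
From mathcomp Require Import all_boot all_order all_algebra all_fingroup zify.
Set Implicit Arguments. Unset Strict Implicit. Unset Printing Implicit Defensive.
Import Order.TTheory GRing.Theory Num.Theory.

(* Proof strategy: r^D_S is odd for every S by Moebius
   inversion mod 2 (beta(T) = sum_{S in T} r(S)), r(empty) = 1, and beta(T)
   even for T nonempty via a fixed-point-free involution. *)

Local Open Scope ring_scope.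

Definition sg (b : bool) : int := if b then -1 else 1.

Lemma cmpR (e f f' : bool) (k j j' : nat) : (j < k)%N -> (j' < k)%N ->
  (sg f * (j.+1)%:Z < sg e * (k.+1)%:Z) = (sg f' * (j'.+1)%:Z < sg e * (k.+1)%:Z).
Proof. move=> h1 h2; case: e; case: f; case: f' => /=; apply/idP/idP; lia. Qed.

Lemma cmpL (e f f' : bool) (k j j' : nat) : (j < k)%N -> (j' < k)%N ->
  (sg e * (k.+1)%:Z < sg f * (j.+1)%:Z) = (sg e * (k.+1)%:Z < sg f' * (j'.+1)%:Z).
Proof. move=> h1 h2; case: e; case: f; case: f' => /=; apply/idP/idP; lia. Qed.

Lemma sgN (e : bool) (a : int) : - (sg e * a) = sg (~~ e) * a.
Proof. by case: e => /=; rewrite ?mulN1r ?mul1r ?opprK. Qed.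

Definition xv n (w : sperm n) (p : 'I_n) : int := sg (w.2 p) * ((w.1 p).+1)%:Z.

Definition o1 m : 'I_(m.+2) := Ordinal (isT : (1 < m.+2)%N).

Lemma wpos_x n (w : sperm n) (p : 'I_n) : wpos w p.+1 = xv w p.
Proof.
rewrite /wpos; case: insubP => [i _ /val_inj -> // | ]; by rewrite ltn_ord.
Qed.

Definition desc m (w : sperm m.+2) (i : 'I_m.+2) : bool :=
  if (i == 0%N :> nat) then xv w ord0 < - xv w (o1 m)
  else xv w i < xv w (inord i.-1).

Lemma DspermE m (w : sperm m.+2) (i : 'I_m.+2) : (i \in Dsperm w) = desc w i.
Proof.
rewrite inE /wval /desc /=.
case: i => [[|k] hk] /=.
  rewrite -(wpos_x w ord0) -(wpos_x w (o1 m)) /=.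
  by [].
rewrite -(wpos_x w (Ordinal hk)) -(wpos_x w (inord k)) inordK //.
by apply: ltnW.
Qed.

Definition par n (s : {ffun 'I_n -> bool}) := \big[addb/false]_i s i.

Lemma odd_card_par n (s : {ffun 'I_n -> bool}) : odd #|[set i | s i]| = par s.
Proof.
rewrite -sum1_card big_mkcond /= (big_morph odd oddD (erefl (odd 0))) /par.
by apply: eq_bigr => i _; rewrite inE; case: (s i).
Qed.

Lemma even_par n (w : sperm n) : even_sperm w = ~~ par w.2.
Proof. by rewrite /even_sperm odd_card_par. Qed.

Lemma par_perm n (s : {ffun 'I_n -> bool}) (t : {perm 'I_n}) :
  par [ffun p => s (t p)] = par s.
Proof.
rewrite /par (reindex_inj (@perm_inj _ t^-1)) /=.
by apply: eq_bigr => i _; rewrite ffunE permKV.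
Qed.

Definition tog2 n (s : {ffun 'I_n -> bool}) (a b : 'I_n) :=
  [ffun p => s p (+) ((p == a) || (p == b))].

Lemma par_tog2 n (s : {ffun 'I_n -> bool}) (a b : 'I_n) : a != b ->
  par (tog2 s a b) = par s.
Proof.
move=> ab; rewrite /par /tog2.
rewrite (eq_bigr (fun p => s p (+) ((p == a) || (p == b)))); last by move=> i _; rewrite ffunE.
rewrite big_split /=.
have -> : \big[addb/false]_(i < n) ((i == a) || (i == b)) = false; last by rewrite addbF.
rewrite (bigD1 a) // (bigD1 b) /=; last by rewrite eq_sym.
rewrite eqxx /= big1 //=; last first.
  by move=> i /andP [ia ib]; rewrite (negbTE ia) (negbTE ib).
by rewrite eqxx orbT.
Qed.

Local Close Scope ring_scope.

Local Open Scope ring_scope.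

Definition posa m (w : sperm m.+2) : 'I_m.+2 := ((w.1)^-1)%g ord0.
Definition posb m (w : sperm m.+2) : 'I_m.+2 := ((w.1)^-1)%g (o1 m).

Definition omega m (w : sperm m.+2) : sperm m.+2 :=
  ((w.1 * tperm ord0 (o1 m))%g,
   if w.2 (posa w) == w.2 (posb w) then tog2 w.2 (posa w) (posb w) else w.2).

Lemma sig_a m (w : sperm m.+2) : w.1 (posa w) = ord0.
Proof. by rewrite /posa permKV. Qed.
Lemma sig_b m (w : sperm m.+2) : w.1 (posb w) = o1 m.
Proof. by rewrite /posb permKV. Qed.
Lemma ab_neq m (w : sperm m.+2) : posa w != posb w.
Proof. by apply/eqP => h; have := sig_a w; rewrite h sig_b. Qed.
Lemma sig_other m (w : sperm m.+2) p : p != posa w -> p != posb w -> (2 <= w.1 p)%N.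
Proof.
move=> pa pb.
have h0 : w.1 p != ord0 by apply/eqP => e; move: pa; rewrite /posa -e permK eqxx.
have h1 : w.1 p != o1 m by apply/eqP => e; move: pb; rewrite /posb -e permK eqxx.
move: h0 h1; rewrite -!val_eqE /=; lia.
Qed.

Lemma omega_x m (w : sperm m.+2) p :
  xv (omega w) p =
  if p == posa w then sg (w.2 (posa w) (+) (w.2 (posa w) == w.2 (posb w))) * (1.+1)%:Z
  else if p == posb w then sg (w.2 (posb w) (+) (w.2 (posa w) == w.2 (posb w))) * (0.+1)%:Z
  else xv w p.
Proof.
rewrite /xv /omega /= permM.
have ab := ab_neq w.
case: (eqVneq p (posa w)) => [E|pa].
  rewrite E sig_a tpermL; case: eqP => e0; rewrite /tog2 ?ffunE ?eqxx ?e0 /= ?addbF //.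
case: (eqVneq p (posb w)) => [E|pb].
  rewrite E sig_b tpermR; case: eqP => e0; rewrite /tog2 ?ffunE ?eqxx ?orbT ?e0 /= ?addbF //.
have := sig_other pa pb => h2.
rewrite tpermD; last 2 first.
- by apply/eqP => /(congr1 val) /= e; move: h2; rewrite -e.
- by apply/eqP => /(congr1 val) /= e; move: h2; rewrite -e.
case: ifP => // _; rewrite /tog2 ffunE.
by rewrite (negbTE pa) (negbTE pb) addbF.
Qed.

Lemma xv_a m (w : sperm m.+2) : xv w (posa w) = sg (w.2 (posa w)) * (0.+1)%:Z.
Proof. by rewrite /xv sig_a. Qed.
Lemma xv_b m (w : sperm m.+2) : xv w (posb w) = sg (w.2 (posb w)) * (1.+1)%:Z.
Proof. by rewrite /xv sig_b. Qed.

Lemma omega_pair m (w : sperm m.+2) c d : c != d ->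
  (xv (omega w) c < xv (omega w) d) = (xv w c < xv w d).
Proof.
move=> cd; rewrite !omega_x.
have ab := ab_neq w.
have ba : posb w != posa w by rewrite eq_sym.
case: (eqVneq c (posa w)) => [E|ca].
  rewrite E in cd *; rewrite ?eqxx ?(negbTE ab) ?(negbTE ba).
  case: (eqVneq d (posa w)) => [E2|da]; first by rewrite E2 eqxx in cd.
  case: (eqVneq d (posb w)) => [E2|db].
    rewrite E2 ?eqxx ?(negbTE ab) ?(negbTE ba) xv_a xv_b.
    by case: (w.2 (posa w)); case: (w.2 (posb w)).
  have h := sig_other da db; rewrite xv_a /xv.
  by apply: cmpR; lia.
case: (eqVneq c (posb w)) => [E|cb].
  rewrite E in cd *; rewrite ?eqxx ?(negbTE ab) ?(negbTE ba).
  case: (eqVneq d (posa w)) => [E2|da].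
    rewrite E2 ?eqxx ?(negbTE ab) ?(negbTE ba) xv_a xv_b.
    by case: (w.2 (posa w)); case: (w.2 (posb w)).
  case: (eqVneq d (posb w)) => [E2|db]; first by rewrite E2 eqxx in cd.
  have h := sig_other da db; rewrite xv_b /xv.
  by apply: cmpR; lia.
have h := sig_other ca cb.
case: (eqVneq d (posa w)) => [E2|da].
  rewrite E2 xv_a /xv.
  by apply: cmpL; lia.
case: (eqVneq d (posb w)) => [E2|db] //.
rewrite E2 xv_b /xv.
by apply: cmpL; lia.
Qed.

Definition inX m (w : sperm m.+2) : bool := (w.1 ord0 < 2)%N && (w.1 (o1 m) < 2)%N.

Lemma omega_zero m (w : sperm m.+2) : ~~ inX w ->
  (xv (omega w) ord0 < - xv (omega w) (o1 m)) = (xv w ord0 < - xv w (o1 m)).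
Proof.
move=> nX.
have ab := ab_neq w.
have [h0|h0] : (2 <= w.1 ord0)%N \/ (2 <= w.1 (o1 m))%N.
  by move: nX; rewrite /inX negb_and -!leqNgt; case/orP; [left|right].
- have na : ord0 != posa w by apply/eqP => e; move: h0; rewrite e sig_a.
  have nb : ord0 != posb w by apply/eqP => e; move: h0; rewrite e sig_b.
  rewrite !omega_x (negbTE na) (negbTE nb).
  case: (eqVneq (o1 m) (posa w)) => [E|na1].
    by rewrite E xv_a !sgN /xv; apply: cmpL; lia.
  case: (eqVneq (o1 m) (posb w)) => [E|nb1] //.
  by rewrite E xv_b !sgN /xv; apply: cmpL; lia.
- have na : o1 m != posa w by apply/eqP => e; move: h0; rewrite e sig_a.
  have nb : o1 m != posb w by apply/eqP => e; move: h0; rewrite e sig_b.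
  rewrite !omega_x (negbTE na) (negbTE nb).
  case: (eqVneq ord0 (posa w)) => [E|na1].
    by rewrite E xv_a /xv !sgN; apply: cmpR; lia.
  case: (eqVneq ord0 (posb w)) => [E|nb1] //.
  by rewrite E xv_b /xv !sgN; apply: cmpR; lia.
Qed.

Lemma inord_pred_neq m (i : 'I_m.+2) : (i != 0%N :> nat) -> i != inord i.-1.
Proof.
move=> i0; apply/eqP => /(congr1 val); rewrite /= inordK; last by apply: (leq_ltn_trans (leq_pred i)).
by move: i0; lia.
Qed.

Lemma omega_desc m (w : sperm m.+2) i : ~~ inX w -> desc (omega w) i = desc w i.
Proof.
move=> nX; rewrite /desc; case: ifP => i0; first by apply: omega_zero.
by apply: omega_pair; apply: inord_pred_neq; rewrite i0.
Qed.

Lemma omega_posa m (w : sperm m.+2) : posa (omega w) = posb w.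
Proof.
rewrite /posa /=; apply: (@perm_inj _ (w.1 * tperm ord0 (o1 m))%g).
by rewrite permKV permM sig_b tpermR.
Qed.
Lemma omega_posb m (w : sperm m.+2) : posb (omega w) = posa w.
Proof.
rewrite /posb /=; apply: (@perm_inj _ (w.1 * tperm ord0 (o1 m))%g).
by rewrite permKV permM sig_a tpermL.
Qed.

Lemma omegaK m (w : sperm m.+2) : omega (omega w) = w.
Proof.
have ab := ab_neq w.
rewrite {1}/omega omega_posa omega_posb.
rewrite /omega /= -mulgA tperm2 mulg1.
case: w ab => sig s /= ab.
congr (_, _).
set a := posa _ in ab *; set b := posb _ in ab *.
case: (eqVneq (s a) (s b)) => [e|e].
  rewrite /tog2 !ffunE !eqxx /= orbT e eqxx.
  apply/ffunP => p; rewrite !ffunE.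
  by rewrite [X in _ (+) X]orbC -addbA addbb addbF.
by rewrite eq_sym (negbTE e).
Qed.

Lemma omega_neq m (w : sperm m.+2) : omega w != w.
Proof.
apply/eqP => e.
have := congr1 (fun u : sperm m.+2 => u.1 (posa w)) e.
by rewrite /= permM sig_a tpermL => /(congr1 val).
Qed.

Lemma tperm01_lt2 m (x : 'I_m.+2) : (tperm ord0 (o1 m) x < 2)%N = (x < 2)%N.
Proof. by case: tpermP => [->|->|]. Qed.

Lemma omega_inX m (w : sperm m.+2) : inX (omega w) = inX w.
Proof. by rewrite /inX /= !permM !tperm01_lt2. Qed.

Lemma omega_even m (w : sperm m.+2) : even_sperm (omega w) = even_sperm w.
Proof.
rewrite !even_par /omega /=; case: ifP => // _.
by rewrite par_tog2 // ab_neq.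
Qed.

Local Close Scope ring_scope.

Lemma invol_even (T : finType) (A : {set T}) (f : T -> T) :
  (forall x, x \in A -> f x \in A) -> (forall x, x \in A -> f (f x) = x) ->
  (forall x, x \in A -> f x != x) -> ~~ odd #|A|.
Proof.
move=> hA hI hN.
move: {2}#|A| (leqnn #|A|) => k; elim: k A hA hI hN => [|k IH] A hA hI hN hk.
  by move: hk; rewrite leqn0 => /eqP ->.
case: (set_0Vmem A) => [-> | [x xA]]; first by rewrite cards0.
set A' := A :\ x :\ f x.
have fxA : f x \in A :\ x by rewrite !inE hN // hA.
have cA : #|A| = (#|A'| + 2)%N.
  by rewrite (cardsD1 x A) xA (cardsD1 (f x) (A :\ x)) fxA /= /A'; lia.
have hA' : forall y, y \in A' -> f y \in A'.
  move=> y; rewrite !inE => /and3P [yfx yx yA].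
  rewrite hA // andbT; apply/andP; split.
    by apply: contra yx => /eqP e; rewrite -(hI y yA) e hI.
  by apply: contra yfx => /eqP e; rewrite -(hI y yA) e.
rewrite cA oddD addbF; apply: IH.
- exact: hA'.
- by move=> y; rewrite !inE => /and3P [_ _ yA]; apply: hI.
- by move=> y; rewrite !inE => /and3P [_ _ yA]; apply: hN.
- by move: hk; rewrite cA; lia.
Qed.

Local Open Scope ring_scope.

Lemma inX_posa m (w : sperm m.+2) : inX w -> (posa w < 2)%N.
Proof.
case/andP => h0 h1.
have d : w.1 ord0 != w.1 (o1 m) by rewrite (inj_eq perm_inj).
case: (eqVneq (w.1 ord0) ord0) => [e|e].
  by rewrite /posa -e permK.
case: (eqVneq (w.1 (o1 m)) ord0) => [e1|e1].
  by rewrite /posa -e1 permK.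
move: e e1 d; rewrite -!val_eqE /=; lia.
Qed.

Lemma inX_big m (w : sperm m.+2) (p : 'I_m.+2) : inX w -> (2 <= p)%N -> (2 <= w.1 p)%N.
Proof.
case/andP => h0 h1 hp.
have d : w.1 ord0 != w.1 (o1 m) by rewrite (inj_eq perm_inj).
have d0 : w.1 p != w.1 ord0 by rewrite (inj_eq perm_inj) -val_eqE /=; lia.
have d1 : w.1 p != w.1 (o1 m) by rewrite (inj_eq perm_inj) -val_eqE /=; lia.
move: d d0 d1; rewrite -!val_eqE /=; lia.
Qed.

Lemma cmp_togL m (w : sperm m.+2) c d : (w.1 c < w.1 d)%N ->
  (- xv w c < xv w d) = (xv w c < xv w d).
Proof. by move=> h; rewrite /xv sgN; apply: cmpR. Qed.

Lemma cmp_togR m (w : sperm m.+2) c d : (w.1 d < w.1 c)%N ->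
  (xv w c < - xv w d) = (xv w c < xv w d).
Proof. by move=> h; rewrite /xv sgN; apply: cmpL. Qed.

Lemma sig_pos m (w : sperm m.+2) p : p != posa w -> (0 < w.1 p)%N.
Proof.
move=> h; have : w.1 p != ord0 by rewrite -(sig_a w) (inj_eq perm_inj).
by rewrite -val_eqE /= lt0n.
Qed.

Definition Bset m (T : {set 'I_m.+2}) : {set 'I_m.+2} :=
  [set p : 'I_m.+2 | [exists t in T, (2 <= t)%N && (t <= p)%N]].
Definition hasBig m (T : {set 'I_m.+2}) := ord_max \in Bset T.
Definition qpos m (T : {set 'I_m.+2}) (w : sperm m.+2) : 'I_m.+2 :=
  [arg min_(p < ord_max in Bset T) w.1 p].
Definition xtog m (T : {set 'I_m.+2}) (w : sperm m.+2) : sperm m.+2 :=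
  (w.1, tog2 w.2 (posa w) (qpos T w)).

Lemma B_ge2 m (T : {set 'I_m.+2}) p : p \in Bset T -> (2 <= p)%N.
Proof. by rewrite inE => /existsP [t /and3P [_ h1 h2]]; apply: leq_trans h2. Qed.

Lemma B_succ m (T : {set 'I_m.+2}) (p p' : 'I_m.+2) : p \in Bset T -> (p' = p.+1 :> nat) -> p' \in Bset T.
Proof.
rewrite !inE => /existsP [t /and3P [h0 h1 h2]] e; apply/existsP; exists t.
by rewrite h0 h1 e; apply: leq_trans h2 _.
Qed.

Lemma B_pred m (T : {set 'I_m.+2}) (p p' : 'I_m.+2) : p \in Bset T -> (p' = p.-1 :> nat) ->
  p' \notin Bset T -> p \in T.
Proof.
rewrite !inE => /existsP [t /and3P [h0 h1 h2]] e; apply: contraNT => pT.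
apply/existsP; exists t; rewrite h0 h1 e /=.
have tp : t != p by apply: contraNneq pT => <-.
by move: tp; rewrite -val_eqE /=; lia.
Qed.

Lemma qposP m (T : {set 'I_m.+2}) (w : sperm m.+2) : hasBig T ->
  qpos T w \in Bset T /\ forall p, p \in Bset T -> (w.1 (qpos T w) <= w.1 p)%N.
Proof. by move=> h; rewrite /qpos; case: arg_minnP => // q qB hq; split. Qed.

Lemma xtog_x m T (w : sperm m.+2) p :
  xv (xtog T w) p = if (p == posa w) || (p == qpos T w) then - xv w p else xv w p.
Proof.
rewrite /xv /xtog /tog2 /= ffunE; case: ifP => _; last by rewrite addbF.
by rewrite addbT sgN.
Qed.

Lemma xtog_desc m T (w : sperm m.+2) (i : 'I_m.+2) : inX w -> hasBig T -> i \notin T ->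
  desc (xtog T w) i = desc w i.
Proof.
move=> hX hB iT.
have [qB qmin] := qposP w hB.
have q2 := B_ge2 qB.
have a2 := inX_posa hX.
have sa := sig_a w.
rewrite /desc; case: ifP => i0.
- have q0 : (ord0 == qpos T w) = false by apply/negbTE; rewrite -val_eqE /=; lia.
  have q1 : (o1 m == qpos T w) = false by apply/negbTE; rewrite -val_eqE /=; lia.
  rewrite !xtog_x q0 q1 !orbF.
  case/andP: hX => h0 h1.
  case: (eqVneq ord0 (posa w)) => [E|na].
    have nb : (o1 m == posa w) = false by rewrite -E.
    rewrite nb.
    have s1 : w.1 (o1 m) != ord0 by rewrite -sa (inj_eq perm_inj) nb.
    have s0 : w.1 ord0 = ord0 by rewrite {1}E sa.
    rewrite /xv !sgN s0; apply: cmpR => //; move: s1 h1; rewrite -val_eqE /=; lia.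
  have E : o1 m = posa w.
    by apply/val_inj; move: na a2; rewrite -val_eqE /=; lia.
  rewrite -E eqxx opprK.
  have s0 : w.1 ord0 != ord0 by apply/eqP => e; move: na; rewrite /posa -{2}e permK eqxx.
  have s1 : w.1 (o1 m) = ord0 by rewrite E sa.
  symmetry; apply: cmp_togR; rewrite s1 /=; move: s0; rewrite -val_eqE /=; lia.
- set d := inord i.-1.
  have dv : (d : nat) = i.-1 by rewrite /d inordK //; apply: (leq_ltn_trans (leq_pred i)).
  have cd : i != d by apply: inord_pred_neq; rewrite i0.
  rewrite !xtog_x.
  case: (eqVneq i (posa w)) => [E|ia] /=.
    have dq : (d == qpos T w) = false by apply/negbTE; rewrite -val_eqE /=; move: a2; rewrite -E dv; lia.
    have da : (d == posa w) = false by rewrite -E eq_sym; apply/negbTE.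
    rewrite da dq /=; apply: cmp_togL.
    by rewrite E sa sig_pos // da.
  case: (eqVneq i (qpos T w)) => [E|iq] /=.
    have dB : d \in Bset T.
      apply/negPn/negP => dB; apply/negP: iT; rewrite negbK E.
      by apply: (@B_pred _ _ _ d) => //; rewrite -E.
    have d2 := B_ge2 dB.
    have da : (d == posa w) = false by apply/negbTE; rewrite -val_eqE /=; lia.
    have dq : (d == qpos T w) = false by rewrite -E eq_sym; apply/negbTE.
    rewrite da dq /=; apply: cmp_togL.
    have := qmin d dB; rewrite -E leq_eqVlt => /orP [|//].
    by move/eqP/val_inj/perm_inj => e; move: cd; rewrite e eqxx.
  case: (eqVneq d (posa w)) => [E|da] /=.
    by apply: cmp_togR; rewrite E sa sig_pos.
  case: (eqVneq d (qpos T w)) => [E|dq] //=.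
  have iB : i \in Bset T by apply: (B_succ qB); rewrite -E dv; move: i0; case: (nat_of_ord i).
  apply: cmp_togR.
  have := qmin i iB; rewrite -E leq_eqVlt => /orP [|//].
  by move/eqP/val_inj/perm_inj => e; move: cd; rewrite e eqxx.
Qed.

Lemma xtog_aq m T (w : sperm m.+2) : inX w -> hasBig T -> posa w != qpos T w.
Proof.
move=> hX hB; have [qB _] := qposP w hB.
have := B_ge2 qB; have := inX_posa hX; rewrite -val_eqE /=; lia.
Qed.

Lemma xtogK m T (w : sperm m.+2) : xtog T (xtog T w) = w.
Proof.
rewrite /xtog /=; rewrite /posa /qpos /=; case: w => sig s /=; congr (_, _).
apply/ffunP => p; rewrite /tog2 !ffunE.
by rewrite -addbA addbb addbF.
Qed.

Lemma xtog_neq m T (w : sperm m.+2) : inX w -> hasBig T -> xtog T w != w.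
Proof.
move=> hX hB; apply/eqP => /(congr1 (fun u : sperm m.+2 => u.2 (posa w))).
rewrite /xtog /tog2 /= ffunE eqxx /=.
by case: (w.2 (posa w)).
Qed.

Lemma xtog_inX m T (w : sperm m.+2) : inX (xtog T w) = inX w.
Proof. by []. Qed.

Lemma xtog_even m T (w : sperm m.+2) : inX w -> hasBig T ->
  even_sperm (xtog T w) = even_sperm w.
Proof. by move=> hX hB; rewrite !even_par /xtog /= par_tog2 // xtog_aq. Qed.

Definition t01 m : {perm 'I_m.+2} := tperm ord0 (o1 m).

Definition swp m (w : sperm m.+2) : sperm m.+2 :=
  ((t01 m * w.1)%g, [ffun p => w.2 (t01 m p)]).
Definition nswp m (w : sperm m.+2) : sperm m.+2 :=
  ((t01 m * w.1)%g, tog2 [ffun p => w.2 (t01 m p)] ord0 (o1 m)).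

Lemma swp_x m (w : sperm m.+2) p : xv (swp w) p = xv w (t01 m p).
Proof. by rewrite /xv /swp /= permM ffunE. Qed.

Lemma nswp_x m (w : sperm m.+2) p :
  xv (nswp w) p = if (p == ord0) || (p == o1 m) then - xv w (t01 m p) else xv w (t01 m p).
Proof.
rewrite /xv /nswp /tog2 /= permM !ffunE; case: ifP => _; last by rewrite addbF.
by rewrite addbT sgN.
Qed.

Lemma t01_big m (p : 'I_m.+2) : (2 <= p)%N -> t01 m p = p.
Proof.
move=> h; rewrite /t01 tpermD //; rewrite -val_eqE /=; lia.
Qed.

Lemma swp_desc m (w : sperm m.+2) (i : 'I_m.+2) : inX w -> (i != 1%N :> nat) ->
  desc (swp w) i = desc w i.
Proof.
move=> hX i1; rewrite /desc; case: ifP => i0.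
  rewrite !swp_x /t01 tpermL tpermR.
  by apply/idP/idP; lia.
have d : (2 <= i)%N by move: i0 i1; case: (nat_of_ord i) => [|[|]].
rewrite !swp_x (@t01_big m i) //.
have dv : (inord i.-1 : 'I_m.+2) = i.-1 :> nat by rewrite inordK //; apply: (leq_ltn_trans (leq_pred i)).
have [i2|i2] : (2 < i)%N \/ i = 2%N :> nat by lia.
  rewrite (@t01_big m (inord i.-1)) //; rewrite dv; lia.
have -> : (inord i.-1 : 'I_m.+2) = o1 m by apply/val_inj => /=; rewrite dv; lia.
rewrite /t01 tpermR /xv.
have := inX_big hX d; case/andP: hX => h0 h1 h2.
by apply: cmpL; lia.
Qed.

Lemma nswp_desc m (w : sperm m.+2) (i : 'I_m.+2) : inX w -> (i != 0%N :> nat) ->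
  desc (nswp w) i = desc w i.
Proof.
move=> hX i0; rewrite /desc (negbTE i0).
have dv : (inord i.-1 : 'I_m.+2) = i.-1 :> nat by rewrite inordK //; apply: (leq_ltn_trans (leq_pred i)).
case: (ltngtP i 2) => [i2|i2|i2].
  have i1 : i = o1 m by apply/val_inj => /=; move: i2 i0; lia.
  have -> : (inord i.-1 : 'I_m.+2) = ord0 by apply/val_inj => /=; rewrite dv i1.
  rewrite i1 !nswp_x /= /t01 tpermL tpermR.
  by apply/idP/idP; lia.
  rewrite !nswp_x.
  have d : (2 <= i)%N by lia.
  have d1 : (2 <= (inord i.-1 : 'I_m.+2))%N by rewrite dv; lia.
  have -> : (i == ord0) || (i == o1 m) = false by apply/negbTE; rewrite -!val_eqE /=; lia.
  have -> : (inord i.-1 == ord0 :> 'I_m.+2) || (inord i.-1 == o1 m) = false.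
    by apply/negbTE; rewrite -!val_eqE /=; lia.
  by rewrite !t01_big.
have -> : (inord i.-1 : 'I_m.+2) = o1 m by apply/val_inj => /=; rewrite dv i2.
have d : (2 <= i)%N by rewrite i2.
rewrite !nswp_x.
have -> : (i == ord0) || (i == o1 m) = false by apply/negbTE; rewrite -!val_eqE /=; lia.
rewrite eqxx orbT t01_big // /t01 tpermR /xv sgN.
have := inX_big hX d; case/andP: hX => h0 h1 h2.
by apply: cmpL; lia.
Qed.

Lemma t01K m p : t01 m (t01 m p) = p.
Proof. by rewrite /t01 tpermK. Qed.

Lemma t01_01 m p : (t01 m p == ord0) || (t01 m p == o1 m) = (p == ord0) || (p == o1 m).
Proof. by rewrite /t01; case: tpermP => [->|->|]; rewrite ?eqxx ?orbT //= => /negbTE -> /negbTE ->. Qed.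

Lemma swpK m (w : sperm m.+2) : swp (swp w) = w.
Proof.
case: w => sig s; rewrite /swp /=; congr (_, _).
  by rewrite mulgA /t01 tperm2 mul1g.
by apply/ffunP => p; rewrite !ffunE t01K.
Qed.

Lemma nswpK m (w : sperm m.+2) : nswp (nswp w) = w.
Proof.
case: w => sig s; rewrite /nswp /=; congr (_, _).
  by rewrite mulgA /t01 tperm2 mul1g.
apply/ffunP => p; rewrite /tog2 !ffunE t01K t01_01.
by rewrite -addbA addbb addbF.
Qed.

Lemma swp_neq m (w : sperm m.+2) : swp w != w.
Proof.
apply/eqP => /(congr1 (fun u : sperm m.+2 => u.1 ord0)).
by rewrite /swp /= permM /t01 tpermL => /perm_inj.
Qed.

Lemma nswp_neq m (w : sperm m.+2) : nswp w != w.
Proof.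
apply/eqP => /(congr1 (fun u : sperm m.+2 => u.1 ord0)).
by rewrite /nswp /= permM /t01 tpermL => /perm_inj.
Qed.

Lemma swp_inX m (w : sperm m.+2) : inX (swp w) = inX w.
Proof. by rewrite /inX /swp /= !permM /t01 tpermL tpermR andbC. Qed.

Lemma nswp_inX m (w : sperm m.+2) : inX (nswp w) = inX w.
Proof. by rewrite /inX /nswp /= !permM /t01 tpermL tpermR andbC. Qed.

Lemma swp_even m (w : sperm m.+2) : even_sperm (swp w) = even_sperm w.
Proof. by rewrite !even_par /swp /= par_perm. Qed.

Lemma nswp_even m (w : sperm m.+2) : even_sperm (nswp w) = even_sperm w.
Proof. by rewrite !even_par /nswp /= par_tog2 // par_perm. Qed.

Local Close Scope ring_scope.

Definition fT m (T : {set 'I_m.+2}) (w : sperm m.+2) : sperm m.+2 :=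
  if inX w then (if hasBig T then xtog T w else if ord0 \in T then nswp w else swp w)
  else omega w.

Lemma noBig m (T : {set 'I_m.+2}) t : ~~ hasBig T -> t \in T -> (t < 2)%N.
Proof.
move=> nB tT; rewrite ltnNge; apply: contra nB => t2.
by rewrite /hasBig inE; apply/existsP; exists t; rewrite tT t2 leq_ord.
Qed.

Lemma fT_inX m T (w : sperm m.+2) : inX (fT T w) = inX w.
Proof.
rewrite /fT; case: ifP => hX.
  by case: ifP => _; [rewrite xtog_inX | case: ifP => _; rewrite ?nswp_inX ?swp_inX].
by rewrite omega_inX hX.
Qed.

Lemma fT_desc m T (w : sperm m.+2) i : T != set0 -> i \notin T ->
  desc (fT T w) i = desc w i.
Proof.
move=> T0 iT; rewrite /fT; case: ifP => hX; last by rewrite omega_desc ?hX.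
case: ifP => hB; first by rewrite xtog_desc.
case: ifP => h0.
  apply: nswp_desc => //; apply: contraNneq iT => e.
  by have -> : i = ord0 by apply/val_inj.
apply: swp_desc => //; apply: contraNneq iT => e.
case/set0Pn: T0 => t tT.
have t2 := noBig (negbT hB) tT.
have -> : i = t; last by [].
apply/val_inj; rewrite /= e.
have : t != ord0 by apply: contraFneq h0 => <-.
by rewrite -val_eqE /=; lia.
Qed.

Lemma fT_even m T (w : sperm m.+2) : even_sperm (fT T w) = even_sperm w.
Proof.
rewrite /fT; case: ifP => hX; last by rewrite omega_even.
case: ifP => hB; first by rewrite xtog_even.
by case: ifP => _; rewrite ?nswp_even ?swp_even.
Qed.

Lemma fTK m T (w : sperm m.+2) : fT T (fT T w) = w.
Proof.
have hX' := fT_inX T w.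
rewrite {1}/fT hX' /fT; case hX: (inX w); last by rewrite omegaK.
case hB: (hasBig T); first by rewrite xtogK.
by case: (ord0 \in T); rewrite ?nswpK ?swpK.
Qed.

Lemma fT_neq m T (w : sperm m.+2) : fT T w != w.
Proof.
rewrite /fT; case: ifP => hX; last by rewrite omega_neq.
case: ifP => hB; first by rewrite xtog_neq.
by case: ifP => _; rewrite ?nswp_neq ?swp_neq.
Qed.

Definition Aset m (T : {set 'I_m.+2}) : {set sperm m.+2} :=
  [set w | even_sperm w && (Dsperm w \subset T)].

Lemma beta_even m (T : {set 'I_m.+2}) : T != set0 -> ~~ odd #|Aset T|.
Proof.
move=> T0; apply: (@invol_even _ _ (fT T)).
- move=> w; rewrite !inE fT_even => /andP [-> DT] /=.
  apply/subsetP => i; rewrite DspermE; apply: contraLR => iT.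
  rewrite fT_desc // -DspermE; apply: contra iT; exact: (subsetP DT).
- by move=> w _; apply: fTK.
- by move=> w _; apply: fT_neq.
Qed.

Lemma incr_id n (f : nat -> nat) : (forall k, k.+1 < n -> f k < f k.+1) ->
  (forall k, k < n -> f k < n) -> forall k, k < n -> f k = k.
Proof.
move=> hi hb.
have up : forall k, k < n -> k <= f k.
  elim=> [//|k IH] kn.
  have := hi k kn; have := IH (ltnW kn); lia.
have down : forall j, j < n -> f (n.-1 - j) <= n.-1 - j.
  elim=> [|j IH] jn.
    rewrite subn0; have := hb n.-1; lia.
  have e : (n.-1 - j = (n.-1 - j.+1).+1)%N by lia.
  have := hi (n.-1 - j.+1); rewrite -e => h.
  have := IH (ltnW jn); have := h; lia.
move=> k kn; have := up k kn; have := down (n.-1 - k).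
have -> : (n.-1 - (n.-1 - k) = k)%N by lia.
move=> h1 h2; have := h1; lia.
Qed.

Definition wid m : sperm m.+2 := (1%g, [ffun _ => false]).

Lemma xv_wid m p : xv (wid m) p = Posz (p : nat).+1.
Proof. by rewrite /xv /wid /= ffunE perm1 /= GRing.mul1r. Qed.

Lemma wid_in m : wid m \in [set w : sperm m.+2 | even_sperm w && (Dsperm w == set0)].
Proof.
rewrite inE even_par /par /wid /= big1 ?ffunE //=.
apply/eqP/setP => i; rewrite DspermE inE /desc !xv_wid.
case: ifP => i0 /=; first by apply/negbTE; rewrite -leNgt; lia.
rewrite inordK; last by apply: (leq_ltn_trans (leq_pred i)).
apply/negbTE; rewrite -leNgt; lia.
by move=> i _; rewrite ffunE.
Qed.

Lemma r0_unique m (w : sperm m.+2) : even_sperm w -> Dsperm w == set0 -> w = wid m.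
Proof.
move=> ev /eqP D0.
have nd : forall i, ~~ desc w i by move=> i; rewrite -DspermE D0 inE.
have xnz : forall p, xv w p != 0%R.
  by move=> p; rewrite /xv; case: (w.2 p) => /=; lia.
have pos : forall k (hk : k.+1 < m.+2), (0 < xv w (Ordinal hk))%R.
  elim=> [|k IH] hk.
    have h0 := nd ord0; have h1 := nd (o1 m).
    rewrite /desc /= in h0 h1.
    have e : (inord 0 : 'I_m.+2) = ord0 by apply/val_inj; rewrite /= inordK.
    rewrite e -leNgt in h1; rewrite -leNgt in h0.
    have := xnz (o1 m).
    have -> : Ordinal hk = o1 m by apply/val_inj.
    lia.
  have h := nd (Ordinal hk); rewrite /desc /= -leNgt in h.
  have e : (inord k.+1 : 'I_m.+2) = Ordinal (ltnW hk) by apply/val_inj; rewrite /= inordK //; lia.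
  rewrite e in h; have := IH (ltnW hk); lia.
have s_pos : forall p : 'I_m.+2, (0 < p)%N -> w.2 p = false.
  move=> [[|k] hk] // _; have := pos k hk; rewrite /xv; case: (w.2 _) => //=; lia.
have s0 : w.2 ord0 = false.
  move: ev; rewrite even_par /par (bigD1 ord0) //= big1 ?addbF; first by move/negbTE.
  by move=> p p0; apply: s_pos; rewrite lt0n.
have sF : forall p, w.2 p = false.
  move=> p; case: (posnP p) => p0; last by apply: s_pos.
  by have -> : p = ord0 by apply/val_inj.
have hi : forall k, k.+1 < m.+2 -> w.1 (inord k) < w.1 (inord k.+1).
  move=> k hk; have h := nd (inord k.+1).
  rewrite /desc in h; rewrite inordK //= in h.
  rewrite /xv !sF -leNgt /= in h.
  rewrite ltn_neqAle; apply/andP; split; last by move: h; lia.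
  rewrite (inj_eq val_inj) (inj_eq perm_inj) -val_eqE /= !inordK //; first by lia.
  exact: ltnW.
have := @incr_id m.+2 (fun k => w.1 (inord k) : nat) hi (fun k _ => ltn_ord _) => hid.
case: w ev D0 nd xnz pos s_pos s0 sF hi hid => sig s /= ev D0 nd xnz pos s_pos s0 sF hi hid.
rewrite /wid; congr (_, _).
  apply/permP => p; rewrite perm1; apply/val_inj => /=.
  by have := hid p (ltn_ord p); rewrite inord_val.
by apply/ffunP => p; rewrite ffunE sF.
Qed.

Lemma r0_one m : #|[set w : sperm m.+2 | even_sperm w && (Dsperm w == set0)]| = 1.
Proof.
apply/eqP/cards1P; exists (wid m); apply/setP => w; rewrite !inE.
apply/idP/idP.
  by case/andP => ev D0; rewrite (r0_unique ev D0).
by move/eqP ->; have := wid_in m; rewrite inE.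
Qed.

Definition rS m (S : {set 'I_m.+2}) :=
  #|[set w : sperm m.+2 | even_sperm w && (Dsperm w == S)]|.

Lemma beta_sum m (T : {set 'I_m.+2}) :
  #|Aset T| = \sum_(S : {set 'I_m.+2} | S \subset T) rS S.
Proof.
rewrite -sum1_card.
rewrite (partition_big (fun w => Dsperm w) (fun S => S \subset T)) /=; last first.
  by move=> w; rewrite inE => /andP [].
apply: eq_bigr => S ST; rewrite /rS -sum1_card; apply: eq_bigl => w; rewrite !inE.
case: (Dsperm w =P S) => [->|_]; by rewrite ?eqxx ?ST ?andbT ?andbF.
Qed.

Lemma odd_sum (I : finType) (A : {set I}) (F : I -> nat) :
  (forall i, i \in A -> odd (F i)) -> odd (\sum_(i in A) F i) = odd #|A|.
Proof.
move=> h; rewrite -sum1_card.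
apply: (big_rec2 (fun a b => odd a = odd b)) => // i a b iA e.
by rewrite !oddD h // e.
Qed.

Lemma r_odd m (S : {set 'I_m.+2}) : odd (rS S).
Proof.
move: {2}#|S| (leqnn #|S|) => k; elim: k S => [|k IH] S hS.
  by move: hS; rewrite leqn0 cards_eq0 => /eqP ->; rewrite /rS r0_one.
case: (eqVneq S set0) => [->|S0]; first by rewrite /rS r0_one.
have := beta_even S0; rewrite beta_sum (bigD1 S) //= oddD.
set P := [set S' : {set 'I_m.+2} | (S' \subset S) && (S' != S)].
have -> : \sum_(S' : {set 'I_m.+2} | (S' \subset S) && (S' != S)) rS S' = \sum_(S' in P) rS S'.
  by apply: eq_bigl => S'; rewrite inE.
rewrite odd_sum; last first.
  move=> S'; rewrite inE => /andP [sub ne].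
  apply: IH; have : S' \proper S by rewrite properEneq ne sub.
  move/proper_card; lia.
have -> : P = powerset S :\ S.
  by apply/setP => S'; rewrite !inE andbC.
have := cardsD1 S (powerset S); rewrite inE subxx card_powerset /= => e.
have pos : 0 < #|S| by rewrite card_gt0.
have : odd (2 ^ #|S|) = false by rewrite oddX /=; case: #|S| pos.
rewrite e oddD /= => /negbFE o; rewrite o.
by case: (odd (rS S)).
Qed.

Fixpoint seqs (N l : nat) : seq (seq nat) :=
  if l is l'.+1 then flatten [seq [seq x :: t | t <- seqs N l'] | x <- iota 0 N]
  else [:: [::]].

Lemma mem_seqs N l s : (s \in seqs N l) = (size s == l) && all (fun x => x < N) s.
Proof.
elim: l s => [|l IH] [|x s] //=.
  by apply/negbTE/flatten_mapP => -[y _ /mapP [t _]].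
rewrite eqSS.
apply/flatten_mapP/idP => [[y]|/and3P [/eqP sz xN allN]].
  rewrite mem_iota => /andP [_ yN] /mapP [t tin [-> ->]].
  by move: tin; rewrite IH => /andP [-> ->]; rewrite yN.
exists x; first by rewrite mem_iota.
by apply/mapP; exists s => //; rewrite IH sz eqxx allN.
Qed.

Lemma uniq_seqs N l : uniq (seqs N l).
Proof.
elim: l => [//|l IH] /=.
apply: (@allpairs_uniq _ _ _ (fun x t => x :: t)) => //; first exact: iota_uniq.
by move=> [x t] [y u] _ _ /= [-> ->].
Qed.

Lemma count_seqsS N l (P : pred (seq nat)) :
  count P (seqs N l.+1) = \sum_(x < N) count (fun t => P ((x : nat) :: t)) (seqs N l).
Proof.
rewrite /=.
have -> : iota 0 N = index_iota 0 N by rewrite /index_iota subn0.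
rewrite /= count_flatten sumnE !big_map big_mkord.
by apply: eq_bigr => x _; rewrite count_map.
Qed.

Lemma cand_perm n l :
  perm_eq [seq map (@nat_of_ord n.+1) (val t) | t : l.-tuple 'I_n.+1] (seqs n.+1 l).
Proof.
apply: uniq_perm.
- rewrite map_inj_uniq ?enum_uniq //.
  by move=> t u /(inj_map val_inj) /val_inj.
- exact: uniq_seqs.
move=> s; rewrite mem_seqs; apply/imageP/idP => [[t _ ->]|/andP [/eqP sz allN]].
  rewrite size_map size_tuple eqxx /=.
  by apply/allP => x /mapP [y _ ->].
have sz' : size (map (@inord n) s) == l by rewrite size_map sz.
exists (Tuple sz') => //=.
rewrite -map_comp -{1}(map_id s); apply/eq_in_map => x xs /=.
by rewrite inordK //; exact: (allP allN).
Qed.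

Definition C N l m := count (fun t => all (fun x => 0 < x) t && (sumn t == m)) (seqs N l).
Definition f2 k := if k is k'.+1 then 2 ^ k' else 1.

Lemma C0 N m : C N 0 m = (m == 0).
Proof. by rewrite /C /= addn0 eq_sym; case: (m == 0). Qed.

Lemma CS N l m : C N l.+1 m = \sum_(x < N) (if (0 < x) && (x <= m) then C N l (m - x) else 0).
Proof.
rewrite /C count_seqsS; apply: eq_bigr => x _ /=.
case: ifP => h.
  apply: eq_count => t; case/andP: h => h0 h1; rewrite h0 /=; congr (_ && _).
  by apply/eqP/eqP; lia.
apply/eqP; rewrite -leqn0 leqNgt -has_count; apply/hasP => -[t _ /andP [/andP [h0 _] /eqP e]].
by move: h; rewrite h0 /=; lia.
Qed.

Lemma sum_f2 k : \sum_(j < k.+1) f2 j = 2 ^ k.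
Proof.
elim: k => [|k IH]; first by rewrite big_ord1.
by rewrite big_ord_recr /= IH expnS; lia.
Qed.

Lemma H_eq N m : m < N ->
  \sum_(x < N) (if (0 < x) && (x <= m) then f2 (m - x) else 0) + (m == 0) = f2 m.
Proof.
move=> mN.
rewrite (bigID (fun x : 'I_N => x < m.+1)) /= [X in _ + X + _]big1; last first.
  by move=> x; rewrite -leqNgt => h; case: ifP => // /andP [_]; lia.
rewrite addn0 -(big_ord_widen N (fun x => if (0 < x) && (x <= m) then f2 (m - x) else 0)) //.
rewrite big_ord_recl /= add0n.
rewrite (eq_bigr (fun i : 'I_m => f2 (rev_ord i))); last first.
  by move=> i _; rewrite /= ltn_ord /= subnS.
have -> : \sum_(i < m) f2 (rev_ord i) = \sum_(i < m) f2 i by rewrite [RHS](reindex_inj rev_ord_inj).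
case: m mN => [|k] _; first by rewrite big_ord0.
by rewrite sum_f2 addn0.
Qed.

Definition G N L m := \sum_(l < L.+1) C N l m.

Lemma G_eq N L m : m <= L -> m < N -> G N L m = f2 m.
Proof.
elim: L m => [|L IH] m mL mN.
  by move: mL; rewrite leqn0 => /eqP ->; rewrite /G big_ord1 C0.
rewrite /G big_ord_recl C0.
rewrite (eq_bigr (fun l : 'I_L.+1 => \sum_(x < N) (if (0 < x) && (x <= m) then C N l (m - x) else 0))); last first.
  by move=> l _; rewrite CS.
rewrite exchange_big /=.
rewrite (eq_bigr (fun x : 'I_N => if (0 < x) && (x <= m) then f2 (m - x) else 0)); last first.
  move=> x _; case: ifP => h; last by rewrite big1.
  by rewrite -IH //; lia.
by rewrite addnC H_eq.
Qed.

Lemma count_pcomp n : count (is_pcomp n) (candidates n) = 2 ^ n.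
Proof.
rewrite /candidates count_flatten sumnE !big_map.
rewrite (eq_bigr (fun l => count (is_pcomp n) (seqs n.+1 l))); last first.
  by move=> l _; apply: (seq.permP (cand_perm n l)).
have -> : iota 1 n.+1 = map S (iota 0 n.+1) by rewrite -(iotaDl 1 0).
have -> : iota 0 n.+1 = index_iota 0 n.+1 by rewrite /index_iota subn0.
rewrite big_map big_mkord.
rewrite (eq_bigr (fun l : 'I_n.+1 => \sum_(x < n.+1) C n.+1 l (n - x))); last first.
  move=> l _; rewrite count_seqsS; apply: eq_bigr => x _; rewrite /C.
  apply: eq_count => t; rewrite /is_pcomp /=; congr (_ && _).
  by have hx := ltn_ord x; apply/eqP/eqP; lia.
rewrite exchange_big /=.
rewrite (eq_bigr (fun x : 'I_n.+1 => f2 (rev_ord x))); last first.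
  by move=> x _; rewrite -/(G n.+1 n (n - x)) G_eq //=; lia.
have -> : \sum_(i < n.+1) f2 (rev_ord i) = \sum_(i < n.+1) f2 i by rewrite [RHS](reindex_inj rev_ord_inj).
by rewrite sum_f2.
Qed.


Theorem corollary5p2 (n : nat) (hn : (4 <= n)%N) :
  (forall a : seq nat, is_pcomp n a -> odd (rD n a)) /\
  cD 2 0 n = 0%N /\ cD 2 1 n = (2 ^ n)%N.
Proof.
have odd_r : forall a, odd (rD n a).
  case: n hn => [|[|m]] // _ a.
  exact: (r_odd [set i : 'I_m.+2 | (i : nat) \in Dpcomp a]).
split; first by move=> a _; apply: odd_r.
split.
  rewrite /cD; apply/eqP; rewrite -leqn0 leqNgt -has_count.
  by apply/hasP => -[a _ /andP [_]]; rewrite modn2 odd_r.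
rewrite /cD -(count_pcomp n); apply: eq_count => a.
by rewrite modn2 odd_r andbT.
Qed.
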